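(* Let $H$ be a bipartite multigraph with parts $A$ and $B$, both nonempty, and let $\alpha>0$. Suppose that for every nonempty subset $B'\subseteq B$, setting $A'=N(B')\subseteq A$, there exists a vertex $u\in A'$ with $d_{B'}(u)<\alpha$, where $d_{B'}(u)$ is the number of edges (with multiplicity) between $u$ and $B'$. Then $\alpha|A|>|B|$.
   Context: $N(B')$ denotes the set of vertices of $A$ adjacent to at least one vertex of $B'$. *)

(* Defs.v *)
From HB Require Import structures.
From mathcomp Require Import all_boot all_order all_algebra.
Set Implicit Arguments. Unset Strict Implicit. Unset Printing Implicit Defensive.

(* A bipartite multigraph with parts A and B is given by the edge multiplicity
   function m : A -> B -> nat (m a b = number of edges between a and b). *)

Definition degIn (A B : finType) (m : A -> B -> nat) (B' : {set B}) (u : A) : nat :=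
  (\sum_(b in B') m u b)%N.

Definition nbhd (A B : finType) (m : A -> B -> nat) (B' : {set B}) : {set A} :=
  [set a : A | [exists b in B', (0 < m a b)%N]].

(* Main.v *)
Require Import Defs.
From HB Require Import structures.
From mathcomp Require Import all_boot all_order all_algebra.
Import Order.TTheory GRing.Theory Num.Theory.
Local Open Scope ring_scope.

Lemma card_le_deg (A B : finType) (m : A -> B -> nat) (B' : {set B}) (u : A) :
  (#|B' :&: [set b | 0 < m u b]%N| <= degIn m B' u)%N.
Proof.
rewrite /degIn -sum1_card.
rewrite [X in (_ <= X)%N](big_setID [set b | 0 < m u b]%N) /=.
apply: leq_trans (leq_addr _ _).
apply: leq_sum => b; rewrite !inE => /andP[_ ->]; done.
Qed.

Lemma nbhd_sub (A B : finType) (m : A -> B -> nat) (B' : {set B}) (u : A) :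
  nbhd m (B' :\: [set b | 0 < m u b]%N) \subset nbhd m B' :\ u.
Proof.
apply/subsetP => a; rewrite !inE => /existsP[b /andP[]].
rewrite !inE => /andP[hb hB'] hm.
apply/andP; split.
  by apply/eqP => eau; subst a; rewrite hm in hb.
by apply/existsP; exists b; rewrite hB' hm.
Qed.

Theorem lemma4 (R : realFieldType) (A B : finType) (m : A -> B -> nat)
    (alpha : R) (halpha : 0 < alpha)
    (hA : (0 < #|A|)%N) (hB : (0 < #|B|)%N)
    (hyp : forall B' : {set B}, B' != set0 ->
       exists2 u, u \in nbhd m B' & (degIn m B' u)%:R < alpha) :
  (#|B|)%:R < alpha * (#|A|)%:R.
Proof.
have key : forall n (B' : {set B}), (#|B'| <= n)%N -> B' != set0 ->
    (#|B'|)%:R < alpha * (#|nbhd m B'|)%:R.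
  elim=> [|n IH] B' hn hne.
    by move: hne; rewrite -card_gt0; case: #|B'| hn.
  have [u hu hdeg] := hyp B' hne.
  set Nu := [set b | 0 < m u b]%N.
  set B'' := B' :\: Nu.
  have hsplit : #|B'| = (#|B' :&: Nu| + #|B''|)%N by rewrite cardsID.
  have hcl : (#|B' :&: Nu|)%:R < alpha.
    by apply: le_lt_trans hdeg; rewrite ler_nat card_le_deg.
  have hN : (#|nbhd m B''| + 1 <= #|nbhd m B'|)%N.
    have := subset_leq_card (@nbhd_sub _ _ m B' u).
    by rewrite (cardsD1 u (nbhd m B')) hu addnC.
  have hN' : (#|nbhd m B''|)%:R + 1 <= (#|nbhd m B'|)%:R :> R.
    by move: hN; rewrite -(ler_nat R) natrD.
  have hpos : (1 <= #|nbhd m B'|)%N by apply/card_gt0P; exists u.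
  rewrite hsplit natrD.
  have [e|ne] := eqVneq B'' set0.
    rewrite e cards0 addr0.
    apply: lt_le_trans hcl _.
    by rewrite ler_pMr // ler1n.
  have hB'' : (#|B''| <= n)%N.
    have : (#|B''| < #|B'|)%N.
      rewrite hsplit -addn1 addnC leq_add2r lt0n cards_eq0.
      move: hu; rewrite inE => /existsP[b /andP[hb hm]].
      by apply/set0Pn; exists b; rewrite !inE hb hm.
    by move=> h; rewrite -ltnS (leq_trans h hn).
  have := IH B'' hB'' ne.
  move=> hi.
  apply: (@lt_le_trans _ _ (alpha + alpha * (#|nbhd m B''|)%:R)).
    by rewrite ltr_leD // ltW.
  rewrite -[X in X + _]mulr1 -mulrDr addrC.
  by apply: ler_wpM2l; [exact: ltW halpha | exact: hN'].
have := key #|B| setT.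
rewrite cardsT => /(_ (leqnn _)).
rewrite -card_gt0 cardsT => /(_ hB) h.
apply: lt_le_trans h _.
by apply: ler_wpM2l; [exact: ltW halpha | rewrite ler_nat max_card].
Qed.
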